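(* For any locale $X$, the functors $\Lambda$ and $\Gamma$ (of the equivalence $Sh(X)\simeq LH/X$) restrict to an equivalence of categories $\mathfrak{POS}_X\simeq POLH/X$ between the category of posheaves on $X$ with order-preserving morphisms and the category of partially ordered sheaf locales over $X$ with order-preserving maps.
   Context: Let $X$ be a locale with frame of opens $\mathcal{O}(X)$. A posheaf on $X$ is a sheaf of sets $F$ with (POS1) each $F(u)$ a poset; (POS2) restriction maps $F(u)\to F(v)$, $x\mapsto x|_v$ ($v\le u$), order-preserving; (POS3) if $u=\bigvee_i u_i$ and $s,t\in F(u)$ satisfy $s|_{u_i}\le t|_{u_i}$ for all $i$, then $s\le t$; a morphism of posheaves is order-preserving if each component $F(u)\to G(u)$ is monotone. A local homeomorphism $f:Y\to X$ is a locale map such that $Y$ is covered by open sublocales $U$ with each $U\rightarrowtail Y\to X$ isomorphic to an open inclusion. $\Gamma(f)(u)$ is the set of sections of $f$ over $u$ (locale maps $s:\downarrow u\to Y$ with $fs$ the inclusion), and the restriction $s|_v$ to $v\le u$ has $s|_v^*(y)=s^*(y)\wedge v$. A local homeomorphism $f$ is a partially ordered sheaf locale if (POSL1) each $\Gamma(f)(u)$ carries a partial order; (POSL2) $s\le t$ in $\Gamma(f)(u)$ implies $s|_v\le t|_v$ for $v\le u$; (POSL3) if $u=\bigvee u_i$ and $s,t\in\Gamma(f)(u)$ with $s|_{u_i}\le t|_{u_i}$ for all $i$, then $s\le t$. For such $f:Y\to X$, $g:Z\to X$, a locale map $\phi:Y\to Z$ with $g\phi=f$ is order-preserving if each map $\Gamma(f)(u)\to\Gamma(g)(u)$,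 $s\mapsto\phi s$, is monotone. $\Lambda(F)$ for a sheaf $F$ is the locale whose frame consists of families $(x_s)_{s\in\coprod_uF(u)}$ with $x_s\le u_s$ ($u_s=u$ for $s\in F(u)$) and $x_s\wedge\epsilon(s,t)=x_t\wedge\epsilon(s,t)$, $\epsilon(s,t)=\bigvee\{w\le u_s\wedge u_t\mid s|_w=t|_w\}$; its sections over $u$ correspond bijectively to $F(u)$ via $s\mapsto p_s$ (with $p_s^*$ the $s$-th projection), and $\Lambda(F)$ is ordered by transporting the order of $F(u)$ along this bijection. *)

(* Defs.v *)
From Stdlib Require Import ProofIrrelevance FunctionalExtensionality.

Set Implicit Arguments.
Unset Strict Implicit.

(* Frames.  A locale X is given by its frame of opens O(X).            *)
(* A locale map f : Y -> X is given by its frame homomorphism           *)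
(* f^* : O(X) -> O(Y).                                                  *)

Record frame := Frame {
  fcar :> Type;
  fle : fcar -> fcar -> Prop;
  fmeet : fcar -> fcar -> fcar;
  fsup : (fcar -> Prop) -> fcar;
  fle_refl : forall a, fle a a;
  fle_trans : forall a b c, fle a b -> fle b c -> fle a c;
  fle_antisym : forall a b, fle a b -> fle b a -> a = b;
  fmeet_l : forall a b, fle (fmeet a b) a;
  fmeet_r : forall a b, fle (fmeet a b) b;
  fmeet_glb : forall a b c, fle c a -> fle c b -> fle c (fmeet a b);
  fsup_ub : forall (S : fcar -> Prop) a, S a -> fle a (fsup S);
  fsup_lub : forall (S : fcar -> Prop) b, (forall a, S a -> fle a b) -> fle (fsup S) b;
  fdistr : forall a (S : fcar -> Prop),
      fmeet a (fsup S) = fsup (fun c => exists b, S b /\ c = fmeet a b)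
}.

Arguments fle {f}.
Arguments fmeet {f}.
Arguments fsup {f}.

Definition ftop (L : frame) : L := fsup (fun _ : L => True).

Section FrameLemmas.
Variable L : frame.
Implicit Types a b c : L.

Lemma meetC a b : fmeet a b = fmeet b a.
Proof. apply fle_antisym; apply fmeet_glb; (apply fmeet_r || apply fmeet_l). Qed.

Lemma meetA a b c : fmeet a (fmeet b c) = fmeet (fmeet a b) c.
Proof.
apply fle_antisym.
- apply fmeet_glb; [apply fmeet_glb|].
  + apply fmeet_l.
  + eapply fle_trans; [apply fmeet_r|apply fmeet_l].
  + eapply fle_trans; [apply fmeet_r|apply fmeet_r].
- apply fmeet_glb; [|apply fmeet_glb].
  + eapply fle_trans; [apply fmeet_l|apply fmeet_l].
  + eapply fle_trans; [apply fmeet_l|apply fmeet_r].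
  + apply fmeet_r.
Qed.

Lemma meet_eq_l a b : fle a b -> fmeet a b = a.
Proof.
intro H; apply fle_antisym; [apply fmeet_l|apply fmeet_glb; [apply fle_refl|exact H]].
Qed.

Lemma meet_eq_r a b : fle b a -> fmeet a b = b.
Proof. intro H; rewrite meetC; apply meet_eq_l; exact H. Qed.

Lemma meet_self_distr a b c : fmeet (fmeet a b) c = fmeet (fmeet a c) (fmeet b c).
Proof.
apply fle_antisym.
- apply fmeet_glb; apply fmeet_glb; try apply fmeet_r.
  + eapply fle_trans; [apply fmeet_l|apply fmeet_l].
  + eapply fle_trans; [apply fmeet_l|apply fmeet_r].
- apply fmeet_glb; [apply fmeet_glb|].
  + eapply fle_trans; [apply fmeet_l|apply fmeet_l].
  + eapply fle_trans; [apply fmeet_r|apply fmeet_l].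
  + eapply fle_trans; [apply fmeet_l|apply fmeet_r].
Qed.

Lemma sup_ext (P Q : L -> Prop) :
  (forall c, P c -> fle c (fsup Q)) -> (forall c, Q c -> fle c (fsup P)) ->
  fsup P = fsup Q.
Proof. intros H1 H2; apply fle_antisym; apply fsup_lub; assumption. Qed.

Lemma distr_r a (S : L -> Prop) :
  fmeet (fsup S) a = fsup (fun c => exists b, S b /\ c = fmeet b a).
Proof.
rewrite meetC, fdistr; apply sup_ext; intros c [b [Hb ->]]; apply fsup_ub;
exists b; split; auto; apply meetC.
Qed.

Lemma cover_le (I : Type) (c : I -> L) (u : L) :
  u = fsup (fun w => exists i, w = c i) -> forall i, fle (c i) u.
Proof. intros -> i; apply fsup_ub; exists i; reflexivity. Qed.

End FrameLemmas.

Lemma sig_eq (A : Type) (P : A -> Prop) (x y : {a : A | P a}) :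
  proj1_sig x = proj1_sig y -> x = y.
Proof.
destruct x as [x px], y as [y py]; simpl; intros ->.
rewrite (proof_irrelevance _ px py); reflexivity.
Qed.

Definition frame_hom (A B : frame) (h : A -> B) : Prop :=
  h (ftop A) = ftop B /\ (forall a b, h (fmeet a b) = fmeet (h a) (h b)) /\
  (forall S : A -> Prop, h (fsup S) = fsup (fun y => exists x, S x /\ y = h x)).

(* frame homomorphism A -> O(down u), where O(down u) = {x in O(X) | x <= u}
   (the frame of the open sublocale down u of X; its top is u, its meets
   and joins are computed in O(X)).  Equivalently: a locale map down u -> A. *)
Definition down_hom (A X : frame) (u : X) (h : A -> X) : Prop :=
  (forall a, fle (h a) u) /\ h (ftop A) = u /\
  (forall a b, h (fmeet a b) = fmeet (h a) (h b)) /\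
  (forall S : A -> Prop, h (fsup S) = fsup (fun y => exists x, S x /\ y = h x)).

(* The open sublocale down a of Y is such that down a >-> Y -> X is
   isomorphic (over X) to an open inclusion down v >-> X: an isomorphism
   of locales down a ~= down v is an order isomorphism between the frames
   {y <= a} and {x <= v}; g is its frame map {x <= v} -> {y <= a}, and the
   triangle over X commutes: g (x /\ v) = f^*(x) /\ a. *)
Definition open_iso_piece (X Y : frame) (f : X -> Y) (a : Y) : Prop :=
  exists (v : X) (g : X -> Y) (h : Y -> X),
    (forall x, fle x v -> fle (g x) a) /\ (forall y, fle y a -> fle (h y) v) /\
    (forall x, fle x v -> h (g x) = x) /\ (forall y, fle y a -> g (h y) = y) /\
    (forall x x', fle x v -> fle x' v -> fle x x' -> fle (g x) (g x')) /\
    (forall y y', fle y a -> fle y' a -> fle y y' -> fle (h y) (h y')) /\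
    (forall x, g (fmeet x v) = fmeet (f x) a).

Definition local_homeo (X Y : frame) (f : X -> Y) : Prop :=
  frame_hom f /\ fsup (open_iso_piece f) = ftop Y.

(* s : down u -> Y (as s^* : O(Y) -> O(down u)) is a section of f over u *)
Definition is_section (X Y : frame) (f : X -> Y) (u : X) (s : Y -> X) : Prop :=
  down_hom u s /\ (forall x, s (f x) = fmeet x u).

Definition restr (X Y : frame) (s : Y -> X) (v : X) : Y -> X :=
  fun y => fmeet (s y) v.

Definition partial_order (T : Type) (R : T -> T -> Prop) : Prop :=
  (forall a, R a a) /\ (forall a b, R a b -> R b a -> a = b) /\
  (forall a b c, R a b -> R b c -> R a c).

(* partially ordered sheaf locale: ord u is the order on Gamma(f)(u) *)
Definition is_POLH (X Y : frame) (f : X -> Y)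
    (ord : X -> (Y -> X) -> (Y -> X) -> Prop) : Prop :=
  local_homeo f /\
  (forall u, (forall s, is_section f u s -> ord u s s) /\
     (forall s t, is_section f u s -> is_section f u t -> ord u s t -> ord u t s -> s = t) /\
     (forall s t r, is_section f u s -> is_section f u t -> is_section f u r ->
        ord u s t -> ord u t r -> ord u s r)) /\
  (forall u v s t, fle v u -> is_section f u s -> is_section f u t ->
     ord u s t -> ord v (restr s v) (restr t v)) /\
  (forall (I : Type) (c : I -> X) (u : X) s t,
     u = fsup (fun w => exists i, w = c i) ->
     is_section f u s -> is_section f u t ->
     (forall i, ord (c i) (restr s (c i)) (restr t (c i))) -> ord u s t).

(* phi : Y -> Z locale map over X, for f : Y -> X, g : Z -> X
   (phi given by phi^* : O(Z) -> O(Y)) *)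
Definition over_map (X Y Z : frame) (f : X -> Y) (g : X -> Z) (phi : Z -> Y) : Prop :=
  frame_hom phi /\ (forall x, phi (g x) = f x).

Definition op_map (X Y Z : frame) (f : X -> Y)
    (ordf : X -> (Y -> X) -> (Y -> X) -> Prop)
    (ordg : X -> (Z -> X) -> (Z -> X) -> Prop) (phi : Z -> Y) : Prop :=
  forall u s t, is_section f u s -> is_section f u t -> ordf u s t ->
    ordg u (fun z => s (phi z)) (fun z => t (phi z)).

Record presheaf (X : frame) := Presheaf {
  sec :> X -> Type;
  res : forall u v : X, fle v u -> sec u -> sec v;
  res_id : forall u (p : fle u u) s, res p s = s;
  res_comp : forall u v w (p : fle v u) (q : fle w v) (r : fle w u) s,
      res q (res p s) = res r s
}.
Arguments res {X} p0 {u v} p s.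

Definition is_sheaf (X : frame) (F : presheaf X) : Prop :=
  forall (I : Type) (c : I -> X) (u : X) (Hu : u = fsup (fun w => exists i, w = c i))
    (s : forall i, F (c i)),
    (forall i j, res F (fmeet_l (c i) (c j)) (s i) = res F (fmeet_r (c i) (c j)) (s j)) ->
    exists t : F u, (forall i, res F (cover_le Hu i) t = s i) /\
      (forall t' : F u, (forall i, res F (cover_le Hu i) t' = s i) -> t' = t).

Definition is_posheaf (X : frame) (F : presheaf X)
    (ord : forall u, F u -> F u -> Prop) : Prop :=
  is_sheaf F /\
  (forall u, partial_order (ord u)) /\
  (forall u v (p : fle v u) s t, ord u s t -> ord v (res F p s) (res F p t)) /\
  (forall (I : Type) (c : I -> X) (u : X)
                (Hu : u = fsup (fun w => exists i, w = c i)) s t,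
                (forall i, ord (c i) (res F (cover_le Hu i) s) (res F (cover_le Hu i) t)) ->
                ord u s t).

Definition sheaf_morph (X : frame) (F G : presheaf X) (a : forall u, F u -> G u) : Prop :=
  forall u v (p : fle v u) s, a v (res F p s) = res G p (a u s).

Definition op_morph (X : frame) (F G : presheaf X)
    (ordF : forall u, F u -> F u -> Prop) (ordG : forall u, G u -> G u -> Prop)
    (a : forall u, F u -> G u) : Prop :=
  forall u s t, ordF u s t -> ordG u (a u s) (a u t).

Definition bijective (A B : Type) (h : A -> B) : Prop :=
  (forall a b, h a = h b -> a = b) /\ (forall b, exists a, h a = b).

Section Gamma.
Variables (X Y : frame) (f : X -> Y).

Lemma restr_section u v s : fle v u -> is_section f u s -> is_section f v (restr s v).
Proof.
intros Hvu [[Hle [Htop [Hmeet Hsup]]] Hsec].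
split; [split; [|split; [|split]]|]; unfold restr.
- intro a; apply fmeet_r.
- rewrite Htop; apply meet_eq_r; exact Hvu.
- intros a b; rewrite Hmeet; apply meet_self_distr.
- intros S; rewrite Hsup, distr_r; apply sup_ext.
  + intros c [b [[x [Hx ->]] ->]]; apply fsup_ub; exists x; auto.
  + intros c [x [Hx ->]]; apply fsup_ub; exists (s x); split; auto; exists x; auto.
- intros x; rewrite Hsec, <- meetA, (meet_eq_r Hvu); reflexivity.
Qed.

Definition Gsec (u : X) := {s : Y -> X | is_section f u s}.

Definition Gres (u v : X) (p : fle v u) (a : Gsec u) : Gsec v :=
  exist _ (restr (proj1_sig a) v) (restr_section p (proj2_sig a)).

Lemma Gres_id u (p : fle u u) a : Gres p a = a.
Proof.
apply sig_eq; simpl; apply functional_extensionality; intro y; unfold restr.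
apply meet_eq_l; exact (proj1 (proj1 (proj2_sig a)) y).
Qed.

Lemma Gres_comp u v w (p : fle v u) (q : fle w v) (r : fle w u) a :
  Gres q (Gres p a) = Gres r a.
Proof.
apply sig_eq; simpl; apply functional_extensionality; intro y; unfold restr.
rewrite <- meetA, (meet_eq_r q); reflexivity.
Qed.

Definition Gamma : presheaf X :=
  {| sec := Gsec; res := Gres; res_id := Gres_id; res_comp := Gres_comp |}.

Definition Gamma_ord (ord : X -> (Y -> X) -> (Y -> X) -> Prop) :
    forall u, Gamma u -> Gamma u -> Prop :=
  fun u a b => ord u (proj1_sig a) (proj1_sig b).

End Gamma.

Lemma comp_section (X Y Z : frame) (f : X -> Y) (g : X -> Z) (phi : Z -> Y) u s :
  over_map f g phi -> is_section f u s -> is_section g u (fun z => s (phi z)).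
Proof.
intros [[Ptop [Pmeet Psup]] Pc] [[Hle [Htop [Hmeet Hsup]]] Hsec].
split; [split; [|split; [|split]]|].
- intro a; apply Hle.
- rewrite Ptop; exact Htop.
- intros a b; rewrite Pmeet; apply Hmeet.
- intros S; rewrite Psup, Hsup; apply sup_ext.
  + intros c [y [[x [Hx ->]] ->]]; apply fsup_ub; exists x; auto.
  + intros c [x [Hx ->]]; apply fsup_ub; exists (phi x); split; auto; exists x; auto.
- intros x; rewrite Pc; apply Hsec.
Qed.

Definition Gamma_mor (X Y Z : frame) (f : X -> Y) (g : X -> Z) (phi : Z -> Y)
    (H : over_map f g phi) : forall u, Gamma f u -> Gamma g u :=
  fun u a => exist _ (fun z => proj1_sig a (phi z)) (comp_section H (proj2_sig a)).

Section Lambda.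
Variables (X : frame) (F : presheaf X).

Definition LI := {u : X & F u}.

Definition eps (s t : LI) : X :=
  fsup (fun w => exists (p : fle w (projT1 s)) (q : fle w (projT1 t)),
                   res F p (projT2 s) = res F q (projT2 t)).

Lemma eps_le_l s t : fle (eps s t) (projT1 s).
Proof. apply fsup_lub; intros w [p [q _]]; exact p. Qed.
Lemma eps_le_r s t : fle (eps s t) (projT1 t).
Proof. apply fsup_lub; intros w [p [q _]]; exact q. Qed.

Definition Lcond (x : LI -> X) : Prop :=
  (forall s, fle (x s) (projT1 s)) /\
  (forall s t, fmeet (x s) (eps s t) = fmeet (x t) (eps s t)).

Definition Lcar := {x : LI -> X | Lcond x}.

Definition Lle (x y : Lcar) : Prop := forall s, fle (proj1_sig x s) (proj1_sig y s).

Lemma Lmeet_cond (x y : Lcar) : Lcond (fun s => fmeet (proj1_sig x s) (proj1_sig y s)).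
Proof.
destruct x as [x [Hx1 Hx2]], y as [y [Hy1 Hy2]]; simpl; split.
- intro s; eapply fle_trans; [apply fmeet_l|apply Hx1].
- intros s t; rewrite (meet_self_distr (x s)), (meet_self_distr (x t)), Hx2, Hy2; reflexivity.
Qed.

Definition Lmeet (x y : Lcar) : Lcar := exist _ _ (Lmeet_cond x y).

Lemma Lsup_cond (S : Lcar -> Prop) :
  Lcond (fun s => fsup (fun c => exists x, S x /\ c = proj1_sig x s)).
Proof.
split.
- intro s; apply fsup_lub; intros c [x [_ ->]]; apply (proj1 (proj2_sig x)).
- intros s t; rewrite !distr_r; apply sup_ext.
  + intros c [b [[x [Hx ->]] ->]]; rewrite (proj2 (proj2_sig x) s t); apply fsup_ub.
    exists (proj1_sig x t); split; auto; exists x; auto.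
  + intros c [b [[x [Hx ->]] ->]]; rewrite <- (proj2 (proj2_sig x) s t); apply fsup_ub.
    exists (proj1_sig x s); split; auto; exists x; auto.
Qed.

Definition Lsup (S : Lcar -> Prop) : Lcar := exist _ _ (Lsup_cond S).

Lemma Lle_refl a : Lle a a.
Proof. intro s; apply fle_refl. Qed.
Lemma Lle_trans a b c : Lle a b -> Lle b c -> Lle a c.
Proof. intros H1 H2 s; eapply fle_trans; [apply H1|apply H2]. Qed.
Lemma Lle_antisym a b : Lle a b -> Lle b a -> a = b.
Proof.
intros H1 H2; apply sig_eq, functional_extensionality; intro s; apply fle_antisym; auto.
Qed.
Lemma Lmeet_l a b : Lle (Lmeet a b) a.
Proof. intro s; apply fmeet_l. Qed.
Lemma Lmeet_r a b : Lle (Lmeet a b) b.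
Proof. intro s; apply fmeet_r. Qed.
Lemma Lmeet_glb a b c : Lle c a -> Lle c b -> Lle c (Lmeet a b).
Proof. intros H1 H2 s; apply fmeet_glb; auto. Qed.
Lemma Lsup_ub (S : Lcar -> Prop) a : S a -> Lle a (Lsup S).
Proof. intros H s; apply fsup_ub; exists a; auto. Qed.
Lemma Lsup_lub (S : Lcar -> Prop) b : (forall a, S a -> Lle a b) -> Lle (Lsup S) b.
Proof. intros H s; apply fsup_lub; intros c [x [Hx ->]]; apply H; exact Hx. Qed.
Lemma Ldistr a (S : Lcar -> Prop) :
  Lmeet a (Lsup S) = Lsup (fun c => exists b, S b /\ c = Lmeet a b).
Proof.
apply sig_eq, functional_extensionality; intro s; simpl; rewrite fdistr; apply sup_ext.
- intros c [b [[x [Hx ->]] ->]]; apply fsup_ub; exists (Lmeet a x); split.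
  + exists x; auto.
  + reflexivity.
- intros c [x [[b [Hb ->]] ->]]; apply fsup_ub; exists (proj1_sig b s); split.
  + exists b; auto.
  + reflexivity.
Qed.

Definition Lam : frame :=
  Frame Lle_refl Lle_trans Lle_antisym Lmeet_l Lmeet_r Lmeet_glb Lsup_ub Lsup_lub Ldistr.

Lemma Lproj_cond (u : X) : Lcond (fun s => fmeet u (projT1 s)).
Proof.
split.
- intro s; apply fmeet_r.
- intros s t; rewrite <- !meetA, (meet_eq_r (eps_le_l s t)), (meet_eq_r (eps_le_r s t)).
  reflexivity.
Qed.

Definition Lam_proj : X -> Lam := fun u => exist _ _ (Lproj_cond u).

(* p_s : down u_s -> Lambda(F), p_s^* = s-th projection *)
Definition psec (s : LI) : Lam -> X := fun x => proj1_sig x s.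

Definition Lam_ord (ord : forall u, F u -> F u -> Prop) :
    X -> (Lam -> X) -> (Lam -> X) -> Prop :=
  fun u sg tu => exists a b : F u,
    sg = psec (existT _ u a) /\ tu = psec (existT _ u b) /\ ord u a b.

Lemma Ltop_cond : Lcond (fun s => projT1 s).
Proof.
split.
- intro s; apply fle_refl.
- intros s t; rewrite (meet_eq_r (eps_le_l s t)), (meet_eq_r (eps_le_r s t)); reflexivity.
Qed.

Lemma psec_section (u : X) (a : F u) : is_section Lam_proj u (psec (existT _ u a)).
Proof.
split; [split; [|split; [|split]]|].
- intro x; apply (proj1 (proj2_sig x) (existT _ u a)).
- unfold psec, ftop; simpl; apply fle_antisym.
  + apply fsup_lub; intros c [x [_ ->]]; apply (proj1 (proj2_sig x) (existT _ u a)).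
  + apply fsup_ub; exists (exist _ _ Ltop_cond); split; [exact I|reflexivity].
- intros x y; reflexivity.
- intros S; reflexivity.
- intros x; reflexivity.
Qed.

(* the counit comparison F(u) -> Gamma(Lambda F)(u),  s |-> p_s *)
Definition kappa (u : X) (a : F u) : Gamma Lam_proj u :=
  exist _ (psec (existT _ u a)) (psec_section a).

End Lambda.

Arguments Lam {X} F.
Arguments Lam_proj {X} F.

Section LamMor.
Variables (X : frame) (F G : presheaf X) (al : forall u, F u -> G u).
Hypothesis Hal : sheaf_morph al.

Definition LIal (s : LI F) : LI G := existT _ (projT1 s) (al (projT2 s)).

Lemma eps_mono s t : fle (eps s t) (eps (LIal s) (LIal t)).
Proof.
apply fsup_lub; intros w [p [q H]]; apply fsup_ub; exists p, q; simpl.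
rewrite <- !Hal, H; reflexivity.
Qed.

Lemma Lmor_cond (y : Lam G) : Lcond (fun s => proj1_sig y (LIal s)).
Proof.
destruct y as [y [Hy1 Hy2]]; simpl; split.
- intro s; apply (Hy1 (LIal s)).
- intros s t.
  rewrite <- (meet_eq_r (eps_mono s t)), !meetA, Hy2; reflexivity.
Qed.

Definition Lam_mor : Lam G -> Lam F := fun y => exist _ _ (Lmor_cond y).

End LamMor.

Arguments Lam_mor {X F G al} Hal.

Section Theta.
Variables (X Y : frame) (f : X -> Y).

Lemma theta_cond (y : Y) :
  Lcond (F := Gamma f) (fun s => proj1_sig (projT2 s) y).
Proof.
split.
- intro s; exact (proj1 (proj1 (proj2_sig (projT2 s))) y).
- intros s t; unfold eps; rewrite !fdistr; apply sup_ext.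
  + intros c [w [[p [q H]] ->]].
    assert (E : restr (proj1_sig (projT2 s)) w = restr (proj1_sig (projT2 t)) w)
      by exact (f_equal (@proj1_sig _ _) H).
    apply fsup_ub; exists w; split; [exists p, q; exact H|].
    exact (f_equal (fun h => h y) E).
  + intros c [w [[p [q H]] ->]].
    assert (E : restr (proj1_sig (projT2 s)) w = restr (proj1_sig (projT2 t)) w)
      by exact (f_equal (@proj1_sig _ _) H).
    apply fsup_ub; exists w; split; [exists p, q; exact H|].
    symmetry; exact (f_equal (fun h => h y) E).
Qed.

Definition theta : Y -> Lam (Gamma f) := fun y => exist _ _ (theta_cond y).

End Theta.

Arguments is_posheaf {X} F ord.
Arguments Gamma_ord {X Y} f ord u a b.
Arguments kappa {X} F u a.
Arguments Gamma_mor {X Y Z f g phi} H u a.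

(* Main.v *)
Require Import Defs.
From Stdlib Require Import ProofIrrelevance FunctionalExtensionality Setoid.
Set Implicit Arguments.
Unset Strict Implicit.

Section G.
Variable L : frame.
Implicit Types a b c d : L.

Lemma le_top a : fle a (ftop L).
Proof. apply fsup_ub; exact I. Qed.

Lemma meet_mono a b c d : fle a b -> fle c d -> fle (fmeet a c) (fmeet b d).
Proof.
intros H1 H2; apply fmeet_glb.
- exact (fle_trans (fmeet_l a c) H1).
- exact (fle_trans (fmeet_r a c) H2).
Qed.

Lemma sup_le (P Q : L -> Prop) :
  (forall c, P c -> exists d, Q d /\ fle c d) -> fle (fsup P) (fsup Q).
Proof.
intros H; apply fsup_lub; intros c Hc; destruct (H c Hc) as [d [Hd Hcd]].
exact (fle_trans Hcd (fsup_ub Hd)).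
Qed.

Lemma hom_mono (M : frame) (h : M -> L) :
  (forall x y, h (fmeet x y) = fmeet (h x) (h y)) ->
  forall x y, fle x y -> fle (h x) (h y).
Proof.
intros Hm x y Hxy; rewrite <- (meet_eq_l Hxy), Hm; apply fmeet_r.
Qed.

Lemma meet_le_trans_l a b c : fle a c -> fle (fmeet a b) c.
Proof. intro H; exact (fle_trans (fmeet_l a b) H). Qed.
Lemma meet_le_trans_r a b c : fle b c -> fle (fmeet a b) c.
Proof. intro H; exact (fle_trans (fmeet_r a b) H). Qed.

End G.

Section Sh.
Variables (X : frame) (F : presheaf X).

Lemma res_pi u v (p q : fle v u) (s : F u) : res F p s = res F q s.
Proof. rewrite (proof_irrelevance _ p q); reflexivity. Qed.

Lemma res_cc u v w (p : fle v u) (q : fle w v) (s : F u) :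
  res F q (res F p s) = res F (fle_trans q p) s.
Proof. apply res_comp. Qed.

Hypothesis HF : is_sheaf F.

Lemma separation (I : Type) (c : I -> X) (u : X)
  (Hu : u = fsup (fun w => exists i, w = c i)) (a b : F u) :
  (forall i, res F (cover_le Hu i) a = res F (cover_le Hu i) b) -> a = b.
Proof.
intros H.
set (sf := fun i => res F (cover_le Hu i) a).
assert (Hc : forall i j, res F (fmeet_l (c i) (c j)) (sf i) = res F (fmeet_r (c i) (c j)) (sf j)).
{ intros i j; unfold sf; rewrite !res_cc; apply res_pi. }
destruct (HF Hu Hc) as [t [Ht Huniq]].
rewrite (Huniq a (fun i => eq_refl)), (Huniq b (fun i => eq_sym (H i))); reflexivity.
Qed.

Lemma agree_sub (s t : LI F) z b (p' : fle b (projT1 s)) (q' : fle b (projT1 t)) :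
  res F p' (projT2 s) = res F q' (projT2 t) -> fle z b ->
  forall (p1 : fle z (projT1 s)) (q1 : fle z (projT1 t)),
  res F p1 (projT2 s) = res F q1 (projT2 t).
Proof.
intros H e p1 q1.
rewrite (res_pi p1 (fle_trans e p')), <- (res_cc p' e), H, res_cc; apply res_pi.
Qed.

Lemma eps_agree (s t : LI F) (w : X) (p : fle w (projT1 s)) (q : fle w (projT1 t)) :
  fle w (eps s t) -> res F p (projT2 s) = res F q (projT2 t).
Proof.
intros Hw.
set (I := {w' : X | exists (p' : fle w' (projT1 s)) (q' : fle w' (projT1 t)),
                   res F p' (projT2 s) = res F q' (projT2 t)}).
set (c := fun i : I => fmeet w (proj1_sig i)).
assert (Hu : w = fsup (fun z => exists i, z = c i)).
{ rewrite <- (meet_eq_l Hw); unfold eps; rewrite fdistr; apply sup_ext.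
  - intros z [b [[p' [q' H]] ->]]; apply fsup_ub.
    exists (exist _ b (ex_intro _ p' (ex_intro _ q' H))); reflexivity.
  - intros z [[b Hb] ->]; apply fsup_ub; exists b; split; [exact Hb|reflexivity]. }
apply (separation (Hu:=Hu)); intros [b [p' [q' H]]].
rewrite !res_cc; eapply (agree_sub H); apply fmeet_r.
Qed.

Lemma eps_sym (s t : LI F) : eps s t = eps t s.
Proof.
unfold eps; apply sup_ext; intros z [p [q H]]; apply fsup_ub; exists q, p; auto.
Qed.

Lemma eps_self (s : LI F) : eps s s = projT1 s.
Proof.
apply fle_antisym; [apply eps_le_l|].
apply fsup_ub; exists (fle_refl _), (fle_refl _); reflexivity.
Qed.

Lemma eps_ge (s t : LI F) (w : X) (p : fle w (projT1 s)) (q : fle w (projT1 t)) :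
  res F p (projT2 s) = res F q (projT2 t) -> fle w (eps s t).
Proof. intro H; apply fsup_ub; exists p, q; exact H. Qed.

Lemma eps_trans (s t r : LI F) : fle (fmeet (eps s t) (eps t r)) (eps s r).
Proof.
set (w := fmeet (eps s t) (eps t r)).
assert (H1 : fle w (eps s t)) by apply fmeet_l.
assert (H2 : fle w (eps t r)) by apply fmeet_r.
pose proof (fle_trans H1 (eps_le_l s t)) as ps.
pose proof (fle_trans H1 (eps_le_r s t)) as pt.
pose proof (fle_trans H2 (eps_le_r t r)) as pr.
apply eps_ge with (p:=ps) (q:=pr).
rewrite (eps_agree ps pt H1); apply eps_agree; exact H2.
Qed.

End Sh.
Set Implicit Arguments.
Unset Strict Implicit.

Section L.
Variables (X : frame) (F : presheaf X).

Lemma Lam_ext (x y : Lam F) : (forall s, proj1_sig x s = proj1_sig y s) -> x = y.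
Proof. intro H; apply sig_eq, functional_extensionality; exact H. Qed.

Lemma Lam_top_comp (t : LI F) : proj1_sig (ftop (Lam F)) t = projT1 t.
Proof.
simpl; apply fle_antisym.
- apply fsup_lub; intros c [x [_ ->]]; apply (proj1 (proj2_sig x)).
- apply fsup_ub; exists (exist _ _ (Ltop_cond F)); split; [exact I|reflexivity].
Qed.

Hypothesis HF : is_sheaf F.

Lemma B_cond (s : LI F) : Lcond (F:=F) (fun t => eps s t).
Proof.
split.
- intro t; apply eps_le_r.
- intros t r; apply fle_antisym; apply fmeet_glb; try apply fmeet_r.
  + apply (eps_trans HF).
  + rewrite (eps_sym t r); apply (eps_trans HF).
Qed.

Definition Bo (s : LI F) : Lam F := exist _ _ (B_cond s).

Lemma top_cover : ftop (Lam F) = fsup (fun b => exists s, b = Bo s).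
Proof.
apply fle_antisym; [|apply le_top].
intro t; rewrite Lam_top_comp; simpl.
apply fsup_ub; exists (Bo t); split; [exists t; reflexivity|].
simpl; symmetry; apply eps_self.
Qed.

Lemma psec_restr u v (p : fle v u) (a : F u) :
  restr (psec (existT _ u a)) v = psec (existT (fun w => F w) v (res F p a)).
Proof.
apply functional_extensionality; intro x; unfold restr, psec.
assert (E : eps (existT (fun w => F w) u a) (existT _ v (res F p a)) = v).
{ apply fle_antisym; [apply eps_le_r|].
  apply eps_ge with (p := p) (q := fle_refl v); simpl; rewrite res_id; reflexivity. }
rewrite <- E at 1; rewrite (proj2 (proj2_sig x)), E.
apply meet_eq_l; apply (proj1 (proj2_sig x) (existT _ v (res F p a))).
Qed.

Lemma psec_inj u (a b : F u) :
  psec (existT (fun w => F w) u a) = psec (existT _ u b) -> a = b.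
Proof.
intro H; pose proof (f_equal (fun h => h (Bo (existT _ u a))) H) as E.
unfold psec in E; simpl in E; rewrite eps_self in E; simpl in E.
pose proof (eps_agree HF (s:=existT _ u a) (t:=existT _ u b) (fle_refl u) (fle_refl u)) as A.
simpl in A; rewrite !res_id in A; apply A; rewrite <- E; apply fle_refl.
Qed.

Lemma xB (x : Lam F) (s : LI F) :
  fmeet x (Bo s) = fmeet (Lam_proj F (proj1_sig x s)) (Bo s).
Proof.
apply Lam_ext; intro t; simpl.
rewrite <- meetA, (meet_eq_r (eps_le_r s t)), (proj2 (proj2_sig x) s t); reflexivity.
Qed.

Lemma surj u (sg : Lam F -> X) :
  is_section (Lam_proj F) u sg -> exists a : F u, sg = psec (existT _ u a).
Proof.
intros [[Hle [Htop [Hmeet Hsup]]] Hsec].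
set (cs := fun s => sg (Bo s)).
assert (Hcs : forall s, fle (cs s) (projT1 s)).
{ intro s; unfold cs.
  apply fle_trans with (b := sg (Lam_proj F (projT1 s))).
  - apply (hom_mono Hmeet); intro t; simpl; apply fmeet_glb; [apply eps_le_l|apply eps_le_r].
  - rewrite Hsec; apply fmeet_l. }
assert (Hcover : u = fsup (fun w => exists s, w = cs s)).
{ rewrite <- Htop, top_cover, Hsup; apply sup_ext.
  - intros c [x [[s ->] ->]]; apply fsup_ub; exists s; reflexivity.
  - intros c [s ->]; apply fsup_ub; exists (Bo s); split; [exists s|]; reflexivity. }
assert (Hcomp : forall s t, fle (fmeet (cs s) (cs t)) (eps s t)).
{ intros s t; unfold cs; rewrite <- Hmeet.
  apply fle_trans with (b := sg (Lam_proj F (eps s t))).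
  - apply (hom_mono Hmeet); intro r; simpl; apply fmeet_glb.
    + rewrite (eps_sym t r); apply (eps_trans HF).
    + apply meet_le_trans_l, eps_le_r.
  - rewrite Hsec; apply fmeet_l. }
set (sf := fun s => res F (Hcs s) (projT2 s)).
assert (Hc : forall s t, res F (fmeet_l (cs s) (cs t)) (sf s) = res F (fmeet_r (cs s) (cs t)) (sf t)).
{ intros s t; unfold sf; rewrite !res_cc; apply (eps_agree HF); apply Hcomp. }
destruct (HF Hcover Hc) as [a [Ha _]].
exists a; apply functional_extensionality; intro x.
transitivity (fsup (fun y => exists s, y = fmeet (proj1_sig x s) (cs s))).
- rewrite <- (meet_eq_l (le_top x)) at 1; rewrite top_cover, fdistr, Hsup; apply sup_ext.
  + intros c [b [[b' [[s ->] ->]] ->]]; apply fsup_ub; exists s.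
    rewrite xB, Hmeet, Hsec, <- meetA, (meet_eq_r (Hle (Bo s))); reflexivity.
  + intros c [s ->]; apply fsup_ub; exists (fmeet x (Bo s)); split.
    * exists (Bo s); split; [exists s|]; reflexivity.
    * rewrite xB, Hmeet, Hsec, <- meetA, (meet_eq_r (Hle (Bo s))); reflexivity.
- unfold psec; set (xa := proj1_sig x (existT _ u a)).
  assert (Hxa : fle xa u) by apply (proj1 (proj2_sig x) (existT _ u a)).
  rewrite <- (meet_eq_l Hxa), Hcover at 1; rewrite fdistr; apply sup_ext.
  + intros c [s ->]; apply fsup_ub; exists (cs s); split; [exists s; reflexivity|].
    assert (Hle2 : fle (cs s) (eps (existT _ u a) s)).
    { apply eps_ge with (p := cover_le Hcover s) (q := Hcs s); simpl; apply Ha. }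
    rewrite <- (meet_eq_r Hle2) at 2; rewrite meetA.
    unfold xa; rewrite (proj2 (proj2_sig x) (existT _ u a) s), <- meetA, (meet_eq_r Hle2).
    reflexivity.
  + intros c [b [[s ->] ->]]; apply fsup_ub; exists s.
    assert (Hle2 : fle (cs s) (eps (existT _ u a) s)).
    { apply eps_ge with (p := cover_le Hcover s) (q := Hcs s); simpl; apply Ha. }
    rewrite <- (meet_eq_r Hle2) at 1; rewrite meetA.
    unfold xa; rewrite (proj2 (proj2_sig x) (existT _ u a) s), <- meetA, (meet_eq_r Hle2).
    reflexivity.
Qed.

End L.
Set Implicit Arguments.
Unset Strict Implicit.

Section GS.
Variables (X Y : frame) (f : X -> Y).

Lemma Gamma_ext u (a b : Gamma f u) : (forall y, proj1_sig a y = proj1_sig b y) -> a = b.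
Proof. intro H; apply sig_eq, functional_extensionality; exact H. Qed.

Lemma sec_le u (s : Y -> X) : is_section f u s -> forall y, fle (s y) u.
Proof. intros [[H _] _]; exact H. Qed.

Lemma sec_meet u (s : Y -> X) : is_section f u s -> forall y y', s (fmeet y y') = fmeet (s y) (s y').
Proof. intros [[_ [_ [H _]]] _]; exact H. Qed.

Lemma sec_top u (s : Y -> X) : is_section f u s -> s (ftop Y) = u.
Proof. intros [[_ [H _]] _]; exact H. Qed.

Lemma sec_sup u (s : Y -> X) : is_section f u s ->
  forall S, s (fsup S) = fsup (fun z => exists y, S y /\ z = s y).
Proof. intros [[_ [_ [_ H]]] _]; exact H. Qed.

Lemma sec_f u (s : Y -> X) : is_section f u s -> forall x, s (f x) = fmeet x u.
Proof. intros [_ H]; exact H. Qed.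

Lemma Gamma_sheaf : is_sheaf (Gamma f).
Proof.
intros I c u Hu s Hs.
set (sv := fun i => proj1_sig (s i)).
assert (Hsec : forall i, is_section f (c i) (sv i)) by (intro i; exact (proj2_sig (s i))).
assert (Hcomp : forall i j y, fmeet (sv i y) (c j) = fmeet (sv j y) (c i)).
{ intros i j y.
  pose proof (f_equal (fun a => proj1_sig a y) (Hs i j)) as E; simpl in E; unfold restr in E.
  fold (sv i) (sv j) in E.
  transitivity (fmeet (sv i y) (fmeet (c i) (c j))).
  - rewrite meetA, (meet_eq_l (sec_le (Hsec i) y)); reflexivity.
  - rewrite E, (meetC (c i) (c j)), meetA, (meet_eq_l (sec_le (Hsec j) y)); reflexivity. }
set (t0 := fun y => fsup (fun z => exists i, z = sv i y)).
assert (Hle : forall y, fle (t0 y) u).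
{ intro y; apply fsup_lub; intros z [i ->].
  exact (fle_trans (sec_le (Hsec i) y) (cover_le Hu i)). }
assert (Hmeet : forall y y', t0 (fmeet y y') = fmeet (t0 y) (t0 y')).
{ intros y y'; apply fle_antisym.
  - apply fsup_lub; intros z [i ->]; rewrite (sec_meet (Hsec i)).
    apply meet_mono; apply fsup_ub; exists i; reflexivity.
  - unfold t0 at 1; rewrite distr_r; apply fsup_lub; intros z [b [[i ->] ->]].
    unfold t0; rewrite fdistr; apply fsup_lub; intros z [b [[j ->] ->]].
    apply fle_trans with (b := sv j (fmeet y y')); [|apply fsup_ub; exists j; reflexivity].
    rewrite (sec_meet (Hsec j)).
    rewrite <- (meet_eq_r (sec_le (Hsec j) y')) at 1; rewrite meetA, Hcomp.
    apply meet_mono; [apply fmeet_l|apply fle_refl]. }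
assert (Hsec0 : is_section f u t0).
{ split; [split; [exact Hle|split; [|split; [exact Hmeet|]]]|].
  - unfold t0; rewrite Hu; apply sup_ext.
    + intros z [i ->]; rewrite (sec_top (Hsec i)); apply fsup_ub; exists i; reflexivity.
    + intros z [i ->]; apply fsup_ub; exists i; rewrite (sec_top (Hsec i)); reflexivity.
  - intro S; apply fle_antisym.
    + apply fsup_lub; intros z [i ->]; rewrite (sec_sup (Hsec i)); apply fsup_lub.
      intros w [y [Hy ->]]; apply fle_trans with (b := t0 y).
      * apply fsup_ub; exists i; reflexivity.
      * apply fsup_ub; exists y; split; [exact Hy|reflexivity].
    + apply fsup_lub; intros z [y [Hy ->]]; apply fsup_lub; intros w [i ->].
      apply fle_trans with (b := sv i (fsup S)).
      * apply (hom_mono (sec_meet (Hsec i))); apply fsup_ub; exact Hy.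
      * apply fsup_ub; exists i; reflexivity.
  - intro x; unfold t0; rewrite Hu, fdistr; apply sup_ext.
    + intros z [i ->]; rewrite (sec_f (Hsec i)); apply fsup_ub; exists (c i); split; [exists i|]; reflexivity.
    + intros z [b [[i ->] ->]]; apply fsup_ub; exists i; rewrite (sec_f (Hsec i)); reflexivity. }
exists (exist _ t0 Hsec0); split.
- intro i; apply Gamma_ext; intro y; simpl; unfold restr; fold (sv i).
  transitivity (fmeet (sv i y) u).
  + unfold t0; rewrite distr_r, Hu, fdistr; apply sup_ext.
    * intros z [b [[j ->] ->]]; rewrite Hcomp; apply fsup_ub; exists (c j); split; [exists j|]; reflexivity.
    * intros z [b [[j ->] ->]]; rewrite <- Hcomp; apply fsup_ub; exists (sv j y); split; [exists j|]; reflexivity.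
  + apply meet_eq_l; exact (fle_trans (sec_le (Hsec i) y) (cover_le Hu i)).
- intros t' Ht'; apply Gamma_ext; intro y; simpl.
  rewrite <- (meet_eq_l (sec_le (proj2_sig t') y)).
  assert (E0 : fmeet (proj1_sig t' y) u = fmeet (proj1_sig t' y) (fsup (fun w => exists i, w = c i)))
    by (f_equal; exact Hu).
  rewrite E0, fdistr; apply sup_ext.
  + intros z [b [[i ->] ->]]; apply fsup_ub; exists i.
    pose proof (f_equal (fun a => proj1_sig a y) (Ht' i)) as E; simpl in E; exact E.
  + intros z [i ->]; apply fsup_ub; exists (c i); split; [exists i; reflexivity|].
    pose proof (f_equal (fun a => proj1_sig a y) (Ht' i)) as E; simpl in E; symmetry; exact E.
Qed.

End GS.
Set Implicit Arguments.
Unset Strict Implicit.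

Set Default Proof Using "All".
Section Piece.
Variables (X Y : frame) (f : X -> Y).
Variables (a : Y) (v : X) (g : X -> Y) (h : Y -> X).
Hypotheses (Hg : forall x, fle x v -> fle (g x) a) (Hh : forall y, fle y a -> fle (h y) v)
  (Hhg : forall x, fle x v -> h (g x) = x) (Hgh : forall y, fle y a -> g (h y) = y)
  (Hgm : forall x x', fle x v -> fle x' v -> fle x x' -> fle (g x) (g x'))
  (Hhm : forall y y', fle y a -> fle y' a -> fle y y' -> fle (h y) (h y'))
  (Hf : forall x, g (fmeet x v) = fmeet (f x) a).

Lemma P_gv : g v = a.
Proof.
apply fle_antisym; [apply Hg, fle_refl|].
rewrite <- (Hgh (fle_refl a)) at 1; apply Hgm; [apply Hh, fle_refl|apply fle_refl|apply Hh, fle_refl].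
Qed.

Lemma P1 : fle a (f v).
Proof.
pose proof (Hf v) as E; rewrite (meet_eq_l (fle_refl v)), P_gv in E.
rewrite E; apply fmeet_l.
Qed.

Lemma P2 z : fle z v -> g z = fmeet (f z) a.
Proof. intro H; rewrite <- (meet_eq_l H) at 1; apply Hf. Qed.

Lemma h_meet p q : fle p a -> fle q a -> h (fmeet p q) = fmeet (h p) (h q).
Proof.
intros Hp Hq; assert (Hpq : fle (fmeet p q) a) by (apply meet_le_trans_l; exact Hp).
apply fle_antisym.
- apply fmeet_glb; apply Hhm; auto; [apply fmeet_l|apply fmeet_r].
- assert (Hr : fle (fmeet (h p) (h q)) v) by (apply meet_le_trans_l, Hh, Hp).
  rewrite <- (Hhg Hr); apply Hhm; auto.
  apply fmeet_glb.
  + apply fle_trans with (b := g (h p)); [apply Hgm; auto; apply fmeet_l|rewrite (Hgh Hp); apply fle_refl].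
  + apply fle_trans with (b := g (h q)); [apply Hgm; auto; apply fmeet_r|rewrite (Hgh Hq); apply fle_refl].
Qed.

Lemma h_sup (T : Y -> Prop) : (forall y, T y -> fle y a) ->
  h (fsup T) = fsup (fun z => exists y, T y /\ z = h y).
Proof.
intros HT; assert (Ha : fle (fsup T) a) by (apply fsup_lub; exact HT).
assert (Hr : fle (fsup (fun z => exists y, T y /\ z = h y)) v).
{ apply fsup_lub; intros z [y [Hy ->]]; apply Hh, HT, Hy. }
apply fle_antisym.
- rewrite <- (Hhg Hr); apply Hhm; auto.
  apply fsup_lub; intros y Hy; apply fle_trans with (b := g (h y)).
  + rewrite (Hgh (HT y Hy)); apply fle_refl.
  + apply Hgm; auto. apply fsup_ub; exists y; auto.
- apply fsup_lub; intros z [y [Hy ->]]; apply Hhm; auto; apply fsup_ub; exact Hy.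
Qed.

Definition sa := fun y => h (fmeet y a).

Lemma sa_section : is_section f v sa.
Proof.
unfold sa; split; [split; [|split; [|split]]|].
- intro y; apply Hh, fmeet_r.
- rewrite (meet_eq_r (le_top a)), <- P_gv, Hhg; [reflexivity|apply fle_refl].
- intros y y'; rewrite <- h_meet; try apply fmeet_r; f_equal.
  rewrite meet_self_distr; reflexivity.
- intro S; rewrite distr_r, h_sup.
  + apply sup_ext.
    * intros z [w [[b [Hb ->]] ->]]; apply fsup_ub; exists b; auto.
    * intros z [y [Hy ->]]; apply fsup_ub; exists (fmeet y a); split; auto; exists y; auto.
  + intros y [b [_ ->]]; apply fmeet_r.
- intro x; rewrite <- Hf, Hhg; [reflexivity|apply fmeet_r].
Qed.

Lemma P4_eq w (t : Y -> X) : is_section f w t ->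
  forall y, fmeet (t y) (t a) = fmeet (sa y) (t a).
Proof.
intros Ht y; unfold sa.
rewrite <- (sec_meet Ht).
assert (Hz : fle (h (fmeet y a)) v) by (apply Hh, fmeet_r).
rewrite <- (Hgh (fmeet_r y a)) at 1; rewrite (P2 Hz), (sec_meet Ht), (sec_f Ht).
rewrite <- meetA, (meet_eq_r (sec_le Ht a)); reflexivity.
Qed.

Lemma P_ta_v w (t : Y -> X) : is_section f w t -> fle (t a) v.
Proof.
intro Ht; apply fle_trans with (b := t (f v)).
- apply (hom_mono (sec_meet Ht)), P1.
- rewrite (sec_f Ht); apply fmeet_l.
Qed.

End Piece.
Set Implicit Arguments.
Unset Strict Implicit.

Section Th.
Variables (X Y : frame) (f : X -> Y).

Lemma theta_frame_hom : frame_hom (theta f).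
Proof.
split; [|split].
- apply Lam_ext; intro s; rewrite Lam_top_comp; simpl.
  apply (sec_top (proj2_sig (projT2 s))).
- intros a b; apply Lam_ext; intro s; simpl; apply (sec_meet (proj2_sig (projT2 s))).
- intro S; apply Lam_ext; intro s; simpl; rewrite (sec_sup (proj2_sig (projT2 s))); apply sup_ext.
  + intros z [y [Hy ->]]; apply fsup_ub; exists (theta f y); split; [exists y; auto|reflexivity].
  + intros z [x [[y [Hy ->]] ->]]; apply fsup_ub; exists y; auto.
Qed.

Lemma theta_over : over_map (Lam_proj (Gamma f)) f (theta f).
Proof.
split; [exact theta_frame_hom|].
intro x; apply Lam_ext; intro s; simpl; apply (sec_f (proj2_sig (projT2 s))).
Qed.

Hypothesis Hloc : local_homeo f.

Lemma cover_sec w (t : Y -> X) : is_section f w t ->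
  w = fsup (fun z => exists a, open_iso_piece f a /\ z = t a).
Proof.
intro Ht; rewrite <- (sec_top Ht), <- (proj2 Hloc), (sec_sup Ht); reflexivity.
Qed.

Lemma theta_refl y y' : fle (theta f y') (theta f y) -> fle y' y.
Proof.
intro H.
rewrite <- (meet_eq_l (le_top y')), <- (proj2 Hloc), fdistr.
apply fsup_lub; intros z [a [Ha ->]].
destruct Ha as [v [g [h [H1 [H2 [H3 [H4 [H5 [H6 H7]]]]]]]]].
pose proof (sa_section H1 H2 H3 H4 H5 H6 H7) as Hsa.
pose proof (H (existT _ v (exist _ _ Hsa))) as E; simpl in E.
rewrite <- (H4 _ (fmeet_r y' a)).
apply fle_trans with (b := g (sa a h y)).
- apply H5; try (apply H2, fmeet_r); exact E.
- unfold sa; rewrite (H4 _ (fmeet_r y a)); apply fmeet_l.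
Qed.

Definition psi (x : Lam (Gamma f)) : Y := fsup (fun y => fle (theta f y) x).

Lemma psi_theta y : psi (theta f y) = y.
Proof.
apply fle_antisym.
- apply fsup_lub; intros y' H; apply theta_refl; exact H.
- apply fsup_ub; apply fle_refl.
Qed.

Lemma theta_psi x : theta f (psi x) = x.
Proof.
apply fle_antisym.
- unfold psi; rewrite (proj2 (proj2 theta_frame_hom)); apply fsup_lub; intros z [y [Hy ->]]; exact Hy.
- intro s.
  set (t := proj1_sig (projT2 s)).
  assert (Ht : is_section f (projT1 s) t) by exact (proj2_sig (projT2 s)).
  change (fle (proj1_sig x s) (t (psi x))).
  unfold psi; rewrite (sec_sup Ht).
  set (xs := proj1_sig x s).
  assert (Hxs : fle xs (projT1 s)) by (unfold xs; apply (proj1 (proj2_sig x) s)).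
  rewrite <- (meet_eq_l Hxs), (cover_sec Ht) at 1; rewrite fdistr.
  apply fsup_lub; intros z [b [[a [Ha ->]] ->]].
  destruct Ha as [v [g [h [H1 [H2 [H3 [H4 [H5 [H6 H7]]]]]]]]].
  pose proof (sa_section H1 H2 H3 H4 H5 H6 H7) as Hsa.
  set (sA := existT (fun w => Gamma f w) v (exist _ _ Hsa)).
  assert (He : fle (t a) (eps sA s)).
  { apply eps_ge with (p := P_ta_v H1 H2 H3 H4 H5 H6 H7 Ht) (q := sec_le Ht a).
    apply Gamma_ext; intro y; simpl; unfold restr.
    symmetry; apply (P4_eq H1 H2 H3 H4 H5 H6 H7 Ht). }
  set (z0 := proj1_sig x sA).
  assert (Hz0 : fle z0 v) by (unfold z0; apply (proj1 (proj2_sig x) sA)).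
  apply fle_trans with (b := t (g z0)).
  + rewrite (P2 H1 H2 H3 H4 H5 H6 H7 Hz0), (sec_meet Ht), (sec_f Ht); apply fmeet_glb; [apply fmeet_glb|].
    * unfold z0; rewrite <- (meet_eq_r He).
      rewrite meetA; unfold xs; rewrite <- (proj2 (proj2_sig x) sA s).
      apply meet_le_trans_l, fmeet_l.
    * apply meet_le_trans_l; exact Hxs.
    * apply fmeet_r.
  + apply fsup_ub; exists (g z0); split; [|reflexivity]; intro r; destruct r as [w [t' Ht']]; simpl.
    rewrite (P2 H1 H2 H3 H4 H5 H6 H7 Hz0), (sec_meet Ht'), (sec_f Ht').
    set (rr := existT (fun w => Gamma f w) w (exist _ _ Ht')).
    assert (He' : fle (t' a) (eps sA rr)).
    { apply eps_ge with (p := P_ta_v H1 H2 H3 H4 H5 H6 H7 Ht') (q := sec_le Ht' a).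
      apply Gamma_ext; intro y; simpl; unfold restr.
      symmetry; apply (P4_eq H1 H2 H3 H4 H5 H6 H7 Ht'). }
    apply fle_trans with (b := fmeet z0 (eps sA rr)).
    * apply meet_mono; [apply fmeet_l|exact He'].
    * unfold z0; rewrite (proj2 (proj2_sig x) sA rr); apply fmeet_l.
Qed.

Lemma psi_frame_hom : frame_hom psi.
Proof.
destruct theta_frame_hom as [Tt [Tm Ts]].
split; [|split].
- rewrite <- Tt; apply psi_theta.
- intros a b.
  assert (E : fmeet a b = theta f (fmeet (psi a) (psi b))) by (rewrite Tm, !theta_psi; reflexivity).
  rewrite E; apply psi_theta.
- intro S.
  assert (E : fsup S = theta f (fsup (fun y => exists x, S x /\ y = psi x))).
  { rewrite Ts; apply sup_ext.
    - intros c Hc; apply fsup_ub; exists (psi c); split; [exists c; auto|]; rewrite theta_psi; reflexivity.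
    - intros c [y [[x [Hx ->]] ->]]; rewrite theta_psi; apply fsup_ub; exact Hx. }
  rewrite E; apply psi_theta.
Qed.

End Th.
Set Implicit Arguments.
Unset Strict Implicit.

Ltac mle := match goal with
 | |- fle _ (fmeet _ _) => apply fmeet_glb; mle
 | |- fle ?a ?a => apply fle_refl
 | |- fle (fmeet ?a ?b) ?c => first [apply meet_le_trans_l; mle | apply meet_le_trans_r; mle]
 | _ => first [apply eps_le_l | apply eps_le_r | assumption]
end.

Section LP.
Variables (X : frame) (F : presheaf X).

Lemma Lam_proj_hom : frame_hom (Lam_proj F).
Proof.
split; [|split].
- apply Lam_ext; intro s; rewrite Lam_top_comp; simpl; apply meet_eq_r, le_top.
- intros a b; apply Lam_ext; intro s; simpl; apply meet_self_distr.
- intro S; apply Lam_ext; intro s; simpl; rewrite distr_r; apply sup_ext.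
  + intros z [b [Hb ->]]; apply fsup_ub; exists (Lam_proj F b); split; [exists b; auto|reflexivity].
  + intros z [x [[b [Hb ->]] ->]]; apply fsup_ub; exists b; auto.
Qed.

Hypothesis HF : is_sheaf F.

Lemma Bo_piece (s : LI F) : open_iso_piece (Lam_proj F) (Bo HF s).
Proof.
exists (projT1 s), (fun x => fmeet (Lam_proj F x) (Bo HF s)), (fun y => proj1_sig y s).
split; [|split; [|split; [|split; [|split; [|split]]]]].
- intros x _; apply fmeet_r.
- intros y _; apply (proj1 (proj2_sig y) s).
- intros x Hx; simpl; rewrite eps_self, <- meetA, (meet_eq_l (fle_refl _)); apply meet_eq_l; exact Hx.
- intros y Hy; apply Lam_ext; intro t; simpl.
  rewrite <- meetA, (meet_eq_r (eps_le_r s t)), (proj2 (proj2_sig y) s t).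
  apply meet_eq_l; apply Hy.
- intros x x' _ _ H; apply meet_mono; [|apply fle_refl].
  intro t; simpl; apply meet_mono; [exact H|apply fle_refl].
- intros y y' _ _ H; apply H.
- intro x; apply Lam_ext; intro t; simpl; apply fle_antisym; mle.
Qed.

Lemma Lam_local : local_homeo (Lam_proj F).
Proof.
split; [exact Lam_proj_hom|].
apply fle_antisym; [apply le_top|].
rewrite (top_cover HF); apply sup_le; intros c [s ->]; exists (Bo HF s); split; [apply Bo_piece|apply fle_refl].
Qed.

End LP.

Section LM.
Variables (X : frame) (F G : presheaf X) (al : forall u, F u -> G u) (Hal : sheaf_morph al).

Lemma Lam_mor_over : over_map (Lam_proj F) (Lam_proj G) (Lam_mor Hal).
Proof.
split; [split; [|split]|].
- apply Lam_ext; intro s; rewrite Lam_top_comp. change (proj1_sig (ftop (Lam G)) (LIal al s) = projT1 s). rewrite Lam_top_comp; reflexivity.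
- intros a b; apply Lam_ext; intro s; reflexivity.
- intro S; apply Lam_ext; intro s; simpl; apply sup_ext.
  + intros z [x [Hx ->]]; apply fsup_ub; exists (Lam_mor Hal x); split; [exists x; auto|reflexivity].
  + intros z [y [[x [Hx ->]] ->]]; apply fsup_ub; exists x; auto.
- intro x; apply Lam_ext; intro s; reflexivity.
Qed.

End LM.
Unset Implicit Arguments.

Theorem corollary4p3 (X : frame) :
  (forall (Y : frame) (f : X -> Y) (ord : X -> (Y -> X) -> (Y -> X) -> Prop),
     is_POLH f ord -> is_posheaf (Gamma f) (Gamma_ord f ord)) /\
  (forall (F : presheaf X) (ord : forall u, F u -> F u -> Prop),
     is_posheaf F ord -> is_POLH (Lam_proj F) (Lam_ord ord)) /\
  (forall (Y Z : frame) (f : X -> Y) (g : X -> Z)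
     (ordf : X -> (Y -> X) -> (Y -> X) -> Prop) (ordg : X -> (Z -> X) -> (Z -> X) -> Prop)
     (phi : Z -> Y) (Hphi : over_map f g phi),
     is_POLH f ordf -> is_POLH g ordg -> op_map f ordf ordg phi ->
     sheaf_morph (Gamma_mor Hphi) /\
     op_morph (Gamma_ord f ordf) (Gamma_ord g ordg) (Gamma_mor Hphi)) /\
  (forall (F G : presheaf X) (ordF : forall u, F u -> F u -> Prop)
     (ordG : forall u, G u -> G u -> Prop)
     (al : forall u, F u -> G u) (Hal : sheaf_morph al),
     is_posheaf F ordF -> is_posheaf G ordG -> op_morph ordF ordG al ->
     over_map (Lam_proj F) (Lam_proj G) (Lam_mor Hal) /\
     op_map (Lam_proj F) (Lam_ord ordF) (Lam_ord ordG) (Lam_mor Hal)) /\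
  (forall (Y : frame) (f : X -> Y) (ord : X -> (Y -> X) -> (Y -> X) -> Prop),
     is_POLH f ord ->
     over_map (Lam_proj (Gamma f)) f (theta f) /\
     op_map (Lam_proj (Gamma f)) (Lam_ord (Gamma_ord f ord)) ord (theta f) /\
     exists psi : Lam (Gamma f) -> Y,
       over_map f (Lam_proj (Gamma f)) psi /\
       (forall y, psi (theta f y) = y) /\ (forall z, theta f (psi z) = z) /\
       op_map f ord (Lam_ord (Gamma_ord f ord)) psi) /\
  (forall (Y Z : frame) (f : X -> Y) (g : X -> Z)
     (ordf : X -> (Y -> X) -> (Y -> X) -> Prop) (ordg : X -> (Z -> X) -> (Z -> X) -> Prop)
     (phi : Z -> Y) (Hphi : over_map f g phi) (Hn : sheaf_morph (Gamma_mor Hphi)),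
     is_POLH f ordf -> is_POLH g ordg -> op_map f ordf ordg phi ->
     forall z, Lam_mor Hn (theta g z) = theta f (phi z)) /\
  (forall (F : presheaf X) (ord : forall u, F u -> F u -> Prop),
     is_posheaf F ord ->
     sheaf_morph (kappa F) /\ (forall u, bijective (kappa F u)) /\
     (forall u a b, ord u a b <-> Gamma_ord (Lam_proj F) (Lam_ord ord) u (kappa F u a) (kappa F u b))) /\
  (forall (F G : presheaf X) (ordF : forall u, F u -> F u -> Prop)
     (ordG : forall u, G u -> G u -> Prop)
     (al : forall u, F u -> G u) (Hal : sheaf_morph al)
     (Hov : over_map (Lam_proj F) (Lam_proj G) (Lam_mor Hal)),
     is_posheaf F ordF -> is_posheaf G ordG -> op_morph ordF ordG al ->
     forall u (a : F u), Gamma_mor Hov u (kappa F u a) = kappa G u (al u a)).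
Proof.
split; [|split; [|split; [|split; [|split; [|split; [|split]]]]]].
-
  intros Y f ord [Hloc [P1 [P2 P3]]].
  split; [apply Gamma_sheaf|split; [|split]].
  + intro u; destruct (P1 u) as [R [A T]]; split; [|split].
    * intro a; apply R, (proj2_sig a).
    * intros a b H1 H2; apply sig_eq; apply A; auto; apply proj2_sig.
    * intros a b c H1 H2; eapply T; eauto; apply proj2_sig.
  + intros u v p a b H; exact (P2 u v _ _ p (proj2_sig a) (proj2_sig b) H).
  + intros I c u Hu a b H; eapply P3; [exact Hu|apply proj2_sig|apply proj2_sig|].
    intro i; apply (H i).
-
  intros F ord [HF [O1 [O2 O3]]].
  split; [apply (Lam_local HF)|split; [|split]].
  + intro u; split; [|split].
    * intros s Hs; destruct (surj HF Hs) as [a ->]; exists a, a; split; [reflexivity|split; [reflexivity|]].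
      apply (O1 u).
    * intros s t _ _ [a [b [-> [-> H1]]]] [b' [a' [E1 [E2 H2]]]].
      apply psec_inj in E1; auto. apply psec_inj in E2; auto. subst.
      f_equal; f_equal; apply (O1 u); auto.
    * intros s t r _ _ _ [a [b [-> [-> H1]]]] [b' [c [E1 [-> H2]]]].
      apply psec_inj in E1; auto. subst.
      exists a, c; split; [reflexivity|split; [reflexivity|]].
      destruct (O1 u) as [_ [_ T]]; eapply T; eauto.
  + intros u v s t Hvu _ _ [a [b [-> [-> H]]]].
    exists (res F Hvu a), (res F Hvu b); split; [apply (psec_restr)|split; [apply (psec_restr)|]].
    apply O2; exact H.
  + intros I c u s t Hu Hs Ht H.
    destruct (surj HF Hs) as [a ->]; destruct (surj HF Ht) as [b ->].
    exists a, b; split; [reflexivity|split; [reflexivity|]].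
    apply (O3 I c u Hu); intro i.
    destruct (H i) as [a' [b' [E1 [E2 Hi]]]].
    rewrite (psec_restr (cover_le Hu i)) in E1, E2.
    apply psec_inj in E1; auto. apply psec_inj in E2; auto.
    rewrite E1, E2; exact Hi.
-
  intros Y Z f g ordf ordg phi Hphi _ _ Hop; split.
  + intros u v p a; apply Gamma_ext; intro y; reflexivity.
  + intros u a b H; apply Hop; auto; apply proj2_sig.
-
  intros F G ordF ordG al Hal _ _ Hop; split; [apply Lam_mor_over|].
  intros u s t _ _ [a [b [-> [-> H]]]].
  exists (al u a), (al u b); split; [reflexivity|split; [reflexivity|]]; apply Hop; exact H.
-
  intros Y f ord [Hloc _].
  split; [apply theta_over|split].
  + intros u s t _ _ [a [b [-> [-> H]]]]; exact H.
  + exists (psi (f:=f)); split; [split; [apply (psi_frame_hom Hloc)|]|split; [|split]].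
    * intro x; rewrite <- (proj2 (theta_over f) x); apply (psi_theta Hloc).
    * apply (psi_theta Hloc).
    * apply (theta_psi Hloc).
    * intros u s t Hs Ht H.
      exists (exist _ s Hs), (exist _ t Ht); split; [|split; [|exact H]].
      -- apply functional_extensionality; intro x; unfold psec.
         rewrite <- (theta_psi Hloc x) at 2; reflexivity.
      -- apply functional_extensionality; intro x; unfold psec.
         rewrite <- (theta_psi Hloc x) at 2; reflexivity.
-
  intros Y Z f g ordf ordg phi Hphi Hn _ _ _ z; apply Lam_ext; intro s; reflexivity.
-
  intros F ord [HF [O1 _]]; split; [|split].
  + intros u v p a; apply Gamma_ext; intro y; simpl.
    rewrite <- (psec_restr p); reflexivity.
  + intro u; split.
    * intros a b E; apply (psec_inj HF); exact (f_equal (@proj1_sig _ _) E).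
    * intro b; destruct (surj HF (proj2_sig b)) as [a Ha]; exists a; apply sig_eq; simpl; symmetry; exact Ha.
  + intros u a b; split.
    * intro H; exists a, b; split; [reflexivity|split; [reflexivity|exact H]].
    * intros [a' [b' [E1 [E2 H]]]]; simpl in E1, E2.
      apply (psec_inj HF) in E1; apply (psec_inj HF) in E2; subst; exact H.
-
  intros F G ordF ordG al Hal Hov _ _ _ u a; apply Gamma_ext; intro y; reflexivity.
Qed.
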